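(* There exists a poset $Q$ for which $AM_3(Q)$ is bqo but $\bigcup AM_3(Q)$ is not bqo.
   Context: $AM_3(Q)$ is the set of three-element maximal antichains of $Q$, ordered by domination ($X\leq Y$ iff each $x\in X$ is below some $y\in Y$), and $\bigcup AM_3(Q)$ is the union of these antichains with the order induced from $Q$. Barriers and bqo: finite subsets of $\mathbb{N}$ are identified with their increasing enumerations; $s\triangleleft t$ means there is a finite $r\subseteq\mathbb{N}$ with $s$ a proper initial segment of $r$ and $t$ equal to $r$ minus its least element. A barrier is an infinite set $B$ of finite subsets of $\mathbb{N}$, no member a proper subset of another, such that every infinite $X\subseteq\bigcup B$ has a nonempty initial segment in $B$; its order type is that of $B$ under the lexicographic order. A map $f$ from a barrier into a quasi-order $Q$ is good if $f(s)\leq f(t)$ for some $s\triangleleft t$; $Q$ is $\alpha$-bqo if every map from a barrier of order type at most $\alpha$ into $Q$ is good, and bqo if it is $\alpha$-bqo for all countable $\alpha$. *)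

(* Defs.v *)
From mathcomp Require Import all_boot.
Set Implicit Arguments. Unset Strict Implicit. Unset Printing Implicit Defensive.

Definition is_poset (T : Type) (le : T -> T -> Prop) : Prop :=
  (forall x, le x x) /\
  (forall x y, le x y -> le y x -> x = y) /\
  (forall x y z, le x y -> le y z -> le x z).

Definition comparable (T : Type) (le : T -> T -> Prop) (x y : T) : Prop :=
  le x y \/ le y x.

Definition is_antichain (T : Type) (le : T -> T -> Prop) (X : T -> Prop) : Prop :=
  forall x y, X x -> X y -> x <> y -> ~ comparable le x y.

Definition is_max_antichain (T : Type) (le : T -> T -> Prop) (X : T -> Prop) : Prop :=
  is_antichain le X /\ forall q, exists2 x, X x & comparable le q x.

Definition has_three_elements (T : Type) (X : T -> Prop) : Prop :=
  exists a b c, [/\ a <> b, a <> c, b <> c &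
    forall x, X x <-> (x = a \/ x = b \/ x = c)].

Definition AM3 (T : Type) (le : T -> T -> Prop) : Type :=
  {X : T -> Prop | is_max_antichain le X /\ has_three_elements X}.

Definition AM3_le (T : Type) (le : T -> T -> Prop) (X Y : AM3 le) : Prop :=
  forall x, proj1_sig X x -> exists2 y, proj1_sig Y y & le x y.

Definition UAM3 (T : Type) (le : T -> T -> Prop) : Type :=
  {q : T | exists X : AM3 le, proj1_sig X q}.

Definition UAM3_le (T : Type) (le : T -> T -> Prop) (p q : UAM3 le) : Prop :=
  le (proj1_sig p) (proj1_sig q).

(* finite subsets of N = strictly increasing lists (increasing enumerations) *)
Definition fin_subset (s : seq nat) : Prop := sorted ltn s.

Definition proper_subset (s t : seq nat) : Prop :=
  {subset s <= t} /\ s <> t.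

Definition infinite_set (X : nat -> Prop) : Prop :=
  forall n, exists m, n <= m /\ X m.

Definition initial_segment (s : seq nat) (X : nat -> Prop) : Prop :=
  fin_subset s /\ exists k, forall n, n \in s <-> (X n /\ n < k).

Definition union_of (B : seq nat -> Prop) (n : nat) : Prop :=
  exists2 s, B s & n \in s.

Definition infinite_family (B : seq nat -> Prop) : Prop :=
  forall l : seq (seq nat), exists2 s, B s & s \notin l.

Definition barrier (B : seq nat -> Prop) : Prop :=
  [/\ (forall s, B s -> fin_subset s),
      infinite_family B,
      (forall s t, B s -> B t -> ~ proper_subset s t) &
      (forall X : nat -> Prop, infinite_set X -> (forall n, X n -> union_of B n) ->
         exists s, [/\ B s, s <> [::] & initial_segment s X])].

(* s <| t : there is a finite r with s a proper initial segment of r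
   and t = r minus its least element *)
Definition tri (s t : seq nat) : Prop :=
  exists r, [/\ fin_subset r, size s < size r, s = take (size s) r & t = behead r].

Definition good (A : Type) (leA : A -> A -> Prop) (B : seq nat -> Prop)
  (f : seq nat -> A) : Prop :=
  exists s t, [/\ B s, B t, tri s t & leA (f s) (f t)].

(* bqo: every map from a barrier is good (every barrier has countable
   order type, so this is "alpha-bqo for every countable alpha") *)
Definition bqo (A : Type) (leA : A -> A -> Prop) : Prop :=
  forall B, barrier B -> forall f : seq nat -> A, good leA B f.

(* Main.v *)
From Stdlib Require Import Classical.
Require Import Defs.
From mathcomp Require Import all_boot zify.
Set Implicit Arguments. Unset Strict Implicit. Unset Printing Implicit Defensive.

Inductive Q := QA of nat | QB of nat | QC of nat.

Definition leb (x y : Q) : bool := match x, y with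
| QA i, QA j => i == j
| QB i, QB j => i <= j
| QC i, QC j => i <= j
| QA i, QB j => i < j
| QC i, QA j => i < j
| QC i, QB j => i.+2 <= j
| _, _ => false end.

Definition le (x y : Q) : Prop := leb x y.

Lemma Q_poset : is_poset le.
Proof.
rewrite /le; split; [|split].
- by case=> i /=.
- case=> i; case=> j //=; try (move=> h1 h2; f_equal; lia).
- case=> i; case=> j; case=> k //=; lia.
Qed.

Lemma Q_eq_dec (x y : Q) : {x = y} + {x <> y}.
Proof. decide equality; apply: PeanoNat.Nat.eq_dec. Qed.

Lemma pick3 (a b c u v : Q) : a <> b -> a <> c -> b <> c ->
  exists x, (x = a \/ x = b \/ x = c) /\ x <> u /\ x <> v.
Proof.
move=> hab hac hbc.
destruct (Q_eq_dec a u) as [<-|hau].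
- destruct (Q_eq_dec b v) as [<-|hbv].
  + exists c; split; [auto|split; congruence].
  + exists b; split; [auto|split; congruence].
- destruct (Q_eq_dec a v) as [<-|hav].
  + destruct (Q_eq_dec b u) as [<-|hbu].
    * exists c; split; [auto|split; congruence].
    * exists b; split; [auto|split; congruence].
  + exists a; split; [auto|split; congruence].
Qed.

Lemma no4 (a b c p q r s : Q) :
  (p = a \/ p = b \/ p = c) -> (q = a \/ q = b \/ q = c) ->
  (r = a \/ r = b \/ r = c) -> (s = a \/ s = b \/ s = c) ->
  p <> q -> p <> r -> p <> s -> q <> r -> q <> s -> r <> s -> False.
Proof.
move=> [->|[->|->]] [->|[->|->]] [->|[->|->]] [->|[->|->]]; congruence.
Qed.

Definition Xn n : Q -> Prop := fun x => x = QA n \/ x = QB n \/ x = QC n.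

Definition idx (x : Q) := match x with QA i | QB i | QC i => i end.

Lemma classify X : is_max_antichain le X -> has_three_elements X ->
  exists m, forall x, X x <-> Xn m x.
Proof.
move=> [Hanti Hmax] [a [b [c [hab hac hbc HX]]]].
have anti : forall x y, X x -> X y -> x <> y -> ~~ leb x y /\ ~~ leb y x.
  move=> x y hx hy hxy; have H := Hanti x y hx hy hxy; rewrite /comparable /le in H.
  by split; apply/negP => h; apply: H; [left|right].
have mx : forall q, exists2 x, X x & (leb q x || leb x q).
  by move=> q; case: (Hmax q) => x hx [h|h]; exists x => //; rewrite h ?orbT.
have uB : forall i j, X (QB i) -> X (QB j) -> i = j.
  move=> i j hi hj; case: (Q_eq_dec (QB i) (QB j)) => [[]//|ne].
  have := anti _ _ hi hj ne => /=; lia.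
have uC : forall i j, X (QC i) -> X (QC j) -> i = j.
  move=> i j hi hj; case: (Q_eq_dec (QC i) (QC j)) => [[]//|ne].
  have := anti _ _ hi hj ne => /=; lia.
have [m XBm] : exists m, X (QB m).
  case: (mx (QB 0)) => [[i|i|i]] hx /=; try lia; by exists i.
pose K := (idx a + idx b + idx c).+1.
have [k XCk] : exists k, X (QC k).
  case: (mx (QC K)) => x hx.
  have : idx x < K by case/HX: hx => [->|[->|->]]; rewrite /K; lia.
  case: x hx => i hx /=; try lia; by exists i.
have hkm : ~~ (k.+2 <= m).
  by have := anti _ _ XCk XBm ltac:(discriminate) => /= [[]].
case: (leqP m k) => hmk; last first.
  case: (pick3 (QB m) (QC k) hab hac hbc) => x [hx [h1 h2]].
  have Xx : X x by apply/HX.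
  case: x hx h1 h2 Xx => j _ h1 h2 Xx.
  - have := anti _ _ Xx XBm h1; have := anti _ _ Xx XCk h2 => /=; lia.
  - by have := uB _ _ Xx XBm => ?; subst.
  - by have := uC _ _ Xx XCk => ?; subst.
have XAm : X (QA m).
  case: (mx (QA m)) => [[j|j|j]] hx /=.
  - by move/orP=> [/eqP e|/eqP e]; subst.
  - by have := uB _ _ hx XBm => ->; lia.
  - by have := uC _ _ hx XCk => ->; lia.
have ekm : k = m.
  case: (leqP k m) => h; first lia.
  have XAm1 : X (QA m.+1).
    case: (mx (QA m.+1)) => [[j|j|j]] hx /=.
    - by move/orP=> [/eqP e|/eqP e]; subst.
    - by have := uB _ _ hx XBm => ->; lia.
    - by have := uC _ _ hx XCk => ->; lia.
  exfalso; apply: (@no4 a b c (QA m) (QA m.+1) (QB m) (QC k)); try by apply/HX.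
  all: try discriminate.
  case; lia.
subst k; exists m => x; split.
- case: x => j Xx; rewrite /Xn.
  + have := anti _ _ Xx XBm ltac:(discriminate); have := anti _ _ Xx XCk ltac:(discriminate) => /=.
    move=> ? ?; left; f_equal; lia.
  + by rewrite (uB _ _ Xx XBm); auto.
  + by rewrite (uC _ _ Xx XCk); auto.
- by case=> [->|[->|->]].
Qed.

Lemma Xn_prop n : is_max_antichain le (Xn n) /\ has_three_elements (Xn n).
Proof.
split; [split|].
- { move=> x y [->|[->|->]] [->|[->|->]] ne; try by case: ne.
  all: rewrite /Defs.comparable /le /=; case=> //; lia. }
- case=> j; rewrite /Defs.comparable /le.
  + case: (ltngtP j n) => h.
    * by exists (QB n); [rewrite /Xn; auto | left].
    * by exists (QC n); [rewrite /Xn; auto | right].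
    * by subst; exists (QA n); [rewrite /Xn; auto | left => /=].
  + exists (QB n); [rewrite /Xn; auto | simpl; lia].
  + exists (QC n); [rewrite /Xn; auto | simpl; lia].
- by exists (QA n), (QB n), (QC n); split.
Qed.

Definition XnS n : AM3 le := exist _ (Xn n) (Xn_prop n).

Lemma least (X : nat -> Prop) n : X n -> exists m, X m /\ forall k, X k -> m <= k.
Proof.
elim/ltn_ind: n => n IH Xn0.
case: (classic (exists k, X k /\ k < n)) => [[k [Xk hk]]|H]; first exact: IH Xk.
exists n; split => // k Xk; case: (leqP n k) => // hk.
by exfalso; apply: H; exists k.
Qed.

Fixpoint subsfrom (lo n : nat) : seq (seq nat) :=
  if n is n'.+1 then subsfrom lo.+1 n' ++ map (cons lo) (subsfrom lo.+1 n')
  else [:: [::]].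

Lemma subsfrom_complete n : forall lo s, sorted ltn s ->
  all (fun x => lo <= x < lo + n) s -> s \in subsfrom lo n.
Proof.
elim: n => [|n IH] lo s.
  by case: s => [|x s] //= _ /andP[]; lia.
case: s => [|x s] Hs Ha /=.
  by rewrite mem_cat (IH lo.+1 [::]).
have Hm := order_path_min ltn_trans Hs.
have Hs' := path_sorted Hs.
move: Ha => /= /andP [hx Ha].
rewrite mem_cat; case: (eqVneq x lo) => [->|hne].
- apply/orP; right; apply: map_f; apply: IH => //.
  apply/allP => y hy; have := allP Ha y hy; have := allP Hm y hy; lia.
- apply/orP; left; apply: IH => //=; apply/andP; split; first lia.
  apply/allP => y hy; have := allP Ha y hy; have := allP Hm y hy; lia.
Qed.

Lemma union_infinite B : (forall s, B s -> fin_subset s) -> infinite_family B ->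
  infinite_set (union_of B).
Proof.
move=> Bfin Binf n; apply: NNPP => H.
case: (Binf (subsfrom 0 n)) => s Bs; apply/negP/negPn.
apply: subsfrom_complete; first exact: Bfin.
apply/allP => x hx; rewrite add0n; case: (leqP n x) => // h.
by exfalso; apply: H; exists x; split => //; exists s.
Qed.

Lemma filter_lt_take k r : sorted ltn r ->
  filter (fun n => n < k) r = take (count (fun n => n < k) r) r.
Proof.
elim: r => [|x r IH] //= Hs.
have Hr := path_sorted Hs.
case: ifP => hx.
  by rewrite add1n /= IH.
have Hm := order_path_min ltn_trans Hs.
have e1 : filter (fun n => n < k) r = [::].
  rewrite (eq_in_filter (a2 := pred0)) ?filter_pred0 // => y hy.
  apply/negbTE; have := allP Hm y hy; move/negbT: hx; lia.
have e2 : count (fun n => n < k) r = 0.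
  rewrite (eq_in_count (a2 := pred0)) ?count_pred0 // => y hy.
  apply/negbTE; have := allP Hm y hy; move/negbT: hx; lia.
by rewrite e1 e2.
Qed.

Lemma tri_step (B : seq nat -> Prop) (Y : nat -> Prop) h s' t :
  (forall s t, B s -> B t -> ~ proper_subset s t) -> B (h :: s') -> B t ->
  initial_segment (h :: s') Y -> initial_segment t (fun n => Y n /\ h < n) ->
  tri (h :: s') t.
Proof.
move=> Banti Bs Bt [Hs [k1 Hk1]] [Ht [k2 Hk2]].
set s := h :: s' in Bs Hs Hk1 *.
have hs : h \in s by rewrite inE eqxx.
have hmin : forall n, Y n -> h <= n.
  move=> n Yn; case: (leqP h n) => // hn; exfalso.
  have hk : h < k1 by have := (proj1 (Hk1 h) hs) => [[]].
  have : n \in s by apply/Hk1; split => //; lia.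
  rewrite inE => /orP [/eqP|hn']; first lia.
  have := allP (order_path_min ltn_trans Hs) n hn'; lia.
have Yh : Y h by have := (proj1 (Hk1 h) hs) => [[]].
pose r := h :: t.
have Hr : sorted ltn r.
  rewrite /r /= path_min_sorted //; apply/allP => y /Hk2 [[_ ?] _]; done.
pose k2' := maxn k2 h.+1.
have Hrm : forall n, n \in r <-> Y n /\ n < k2'.
  move=> n; rewrite /r inE; split.
  - by case/orP => [/eqP ->|/Hk2 [[? ?] ?]]; split => //; rewrite /k2'; lia.
  - move=> [Yn hn]; case: (eqVneq n h) => [->|ne]; first by rewrite ?eqxx.
    apply/orP; right; apply/Hk2; have := hmin n Yn; split; [split|]=> //; rewrite /k2' in hn; lia.
have tsub : {subset t <= r} by move=> y hy; rewrite /r inE hy orbT.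
have tneq : t <> s.
  move=> e; have : h \in t by rewrite e.
  by move/Hk2 => [[_ ?] _]; lia.
case: (leqP k1 k2') => hk; last first.
  exfalso; apply: (Banti t s Bt Bs); split => // y hy.
  apply/Hk1; case: (proj1 (Hrm y) (tsub y hy)) => Yy hy'; split => //; lia.
have es : s = filter (fun n => n < k1) r.
  apply: (irr_sorted_eq ltn_trans ltnn Hs (sorted_filter ltn_trans _ Hr)).
  move=> n; rewrite mem_filter; apply/idP/idP.
  - move/Hk1 => [Yn hn]; rewrite hn /=; apply/Hrm; split => //; lia.
  - move/andP => [hn /Hrm [Yn _]]; exact/Hk1.
have et : s = take (size s) r.
  by rewrite {2}es size_filter -filter_lt_take.
have nsr : s <> r.
  move=> e; apply: (Banti t s Bt Bs); split => //; by rewrite e.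
exists r; split => //.
have : size s <= size r by rewrite {1}et size_take_min geq_minr.
rewrite leq_eqVlt => /orP [/eqP e|//].
by exfalso; apply: nsr; rewrite et e take_size.

Qed.

Lemma AM3_le_rank (X Y : AM3 le) n m :
  (forall x, proj1_sig X x <-> Xn n x) -> (forall x, proj1_sig Y x <-> Xn m x) ->
  n <= m -> AM3_le X Y.
Proof.
move=> HX HY hnm x /HX [->|[->|->]].
- case: (ltngtP n m) => h; try lia.
  + by exists (QB m); [apply/HY; rewrite /Xn; auto | rewrite /le /=].
  + by subst; exists (QA m); [apply/HY; rewrite /Xn; auto | rewrite /le /=].
- by exists (QB m); [apply/HY; rewrite /Xn; auto | rewrite /le /=].
- by exists (QC m); [apply/HY; rewrite /Xn; auto | rewrite /le /=].
Qed.

Lemma AM3_bqo : bqo (@AM3_le Q le).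
Proof.
move=> B [Bfin Binf Banti Bbar] f; apply: NNPP => bad.
have bad' : forall s t, B s -> B t -> tri s t -> ~ AM3_le (f s) (f t).
  by move=> s t Bs Bt st le_st; apply: bad; exists s, t; split.
have rank : forall s, exists m, forall x, proj1_sig (f s) x <-> Xn m x.
  move=> s; case: (proj2_sig (f s)) => H1 H2; exact: classify.
have key : forall r (Y : nat -> Prop) s, infinite_set Y -> (forall n, Y n -> union_of B n) ->
    B s -> s <> [::] -> initial_segment s Y ->
    (forall x, proj1_sig (f s) x <-> Xn r x) -> False.
  elim/ltn_ind => r IH Y s Yinf YU Bs sne Hs Hr.
  case: s sne Bs Hs Hr => [//|h s'] _ Bs Hs Hr.
  pose Y' := fun n => Y n /\ h < n.
  have Y'inf : infinite_set Y'.
    move=> n; case: (Yinf (maxn n h.+1)) => m [hm Ym]; exists m; split; [lia | split => //; lia].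
  have Y'U : forall n, Y' n -> union_of B n by move=> n [/YU].
  case: (Bbar Y' Y'inf Y'U) => t [Bt tne Ht].
  have st := tri_step Banti Bs Bt Hs Ht.
  case: (rank t) => m Hm.
  case: (leqP r m) => hrm.
    by apply: (bad' _ _ Bs Bt st); apply: (AM3_le_rank Hr Hm).
  exact: (IH m hrm Y' t Y'inf Y'U Bt tne Ht Hm).
have Uinf := union_infinite Bfin Binf.
case: (Bbar (union_of B) Uinf (fun n h => h)) => s [Bs sne Hs].
case: (rank s) => m Hm.
exact: (key m (union_of B) s Uinf (fun n h => h) Bs sne Hs Hm).
Qed.

Definition Bs (s : seq nat) : Prop := exists n, s = [:: n].

Lemma Bs_barrier : barrier Bs.
Proof.
split.
- by move=> s [n ->].
- move=> l.
  pose L := map (fun n => [:: n]) (iota 0 (size l).+1).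
  case: (boolP (all (fun s => s \in l) L)) => H.
    exfalso.
    have U : uniq L by rewrite map_inj_uniq ?iota_uniq // => x y [].
    have := uniq_leq_size U (fun x hx => allP H x hx).
    by rewrite size_map size_iota ltnn.
  move/allPn: H => [s /mapP [n _ ->] hn]; exists [:: n] => //; by exists n.
- move=> s t [a ->] [b ->] [hsub hne]; apply: hne.
  have : a \in [:: b] by apply: hsub; rewrite inE.
  rewrite inE => e; by rewrite (eqP e).
- move=> X Xinf XU.
  case: (Xinf 0) => m0 [_ Xm0].
  case: (least Xm0) => m [Xm Hmin].
  exists [:: m]; split => //; first by exists m.
  split => //; exists m.+1 => n; rewrite inE; split.
  + by move/eqP => ->; split.
  + move=> [Xn0 hn]; have := Hmin n Xn0; rewrite ?inE; lia.
Qed.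

Lemma QA_in n : exists X : AM3 le, proj1_sig X (QA n).
Proof. by exists (XnS n); rewrite /= /Xn; left. Qed.

Definition ua n : UAM3 le := exist _ (QA n) (QA_in n).

Lemma UAM3_not_bqo : ~ bqo (@UAM3_le Q le).
Proof.
move=> H; case: (H Bs Bs_barrier (fun s => ua (head 0 s))) => s [t [[i ->] [j ->] [r [Hr h1 h2 h3]] hle]].
move: hle; rewrite /UAM3_le /le /=.
case: r Hr h1 h2 h3 => [|x [|y r']] //= Hr _ [->] [->].
move: Hr => /andP [hxy _] /eqP hxy'; lia.
Qed.

Theorem corollary6p7 :
  exists (T : Type) (le : T -> T -> Prop),
    [/\ is_poset le, bqo (@AM3_le T le) & ~ bqo (@UAM3_le T le)].
Proof.
exists Q, le; split; [exact: Q_poset | exact: AM3_bqo | exact: UAM3_not_bqo].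
Qed.
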